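(* Let $s=a_1a_2\cdots a_n$ be a permutation of $[n]$ in one-line form, and let $\bar s=(0,a_1,a_2,\ldots,a_n)$ and $p_t=(n,n-1,\ldots,1,0)$, both $(n+1)$-cycles on $[n]^*=\{0,1,\ldots,n\}$. Then $$td(s)\ \ge\ \max_{\gamma}\ \frac{\max\{|C(p_t\bar s\gamma)-C(\gamma)|,\ |C_{odd}(p_t\bar s\gamma)-C_{odd}(\gamma)|,\ |C_{ev}(p_t\bar s\gamma)-C_{ev}(\gamma)|\}}{2},$$ where $\gamma$ ranges over all permutations of $[n]^*$.
   Context: Permutations are multiplied as composition of maps, $(\sigma\tau)(x)=\sigma(\tau(x))$. For a permutation $\pi$, $C(\pi)$, $C_{odd}(\pi)$ and $C_{ev}(\pi)$ denote the number of cycles, of odd-length cycles and of even-length cycles of $\pi$ (fixed points counted as cycles of length $1$). A transposition acting on a sequence $a_1\cdots a_n$ replaces it by $a_1\cdots a_{i-1}a_{j+1}\cdots a_k a_i\cdots a_j a_{k+1}\cdots a_n$ for some $1\le i\le j<k\le n$ (interchanging two adjacent blocks). The transposition distance $td(s)$ is the minimum number of transpositions needed to transform $s$ into $e_n=12\cdots n$. *)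

(* Defs.v *)
From mathcomp Require Import all_boot all_order all_algebra all_fingroup.
Set Implicit Arguments. Unset Strict Implicit. Unset Printing Implicit Defensive.

(* A transposition on a sequence a_1 ... a_n with 1 <= i <= j < k <= n:
   a_1..a_{i-1} a_{j+1}..a_k a_i..a_j a_{k+1}..a_n  (positions 1-based). *)
Definition transp (s : seq nat) (i j k : nat) : seq nat :=
  take i.-1 s ++ drop j (take k s) ++ drop i.-1 (take j s) ++ drop k s.

Definition valid_transp (n i j k : nat) : bool :=
  [&& 1 <= i, i <= j, j < k & k <= n].

(* [sortable_in s m]: s can be transformed into e_n = 1 2 ... n (n = size s)
   by a sequence of exactly m transpositions.  td(s) is the least such m. *)
Fixpoint sortable_in (s : seq nat) (m : nat) : Prop :=
  match m with
  | 0 => s = iota 1 (size s)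
  | m'.+1 => exists i j k, valid_transp (size s) i j k /\ sortable_in (transp s i j k) m'
  end.

Definition is_cycle_of (m : nat) (L : seq nat) (p : {perm 'I_m}) : Prop :=
  perm_eq L (iota 0 m) /\
  forall (i : nat) (x : 'I_m), i < m -> val x = nth 0 L i ->
    val (p x) = nth 0 L (i.+1 %% m).

(* cycle counts; fixed points count as cycles of length 1 *)
Definition ncycles (T : finType) (p : {perm T}) : nat := #|porbits p|.
Definition ncycles_odd (T : finType) (p : {perm T}) : nat :=
  #|[set c in porbits p | odd #|c|]|.
Definition ncycles_even (T : finType) (p : {perm T}) : nat :=
  #|[set c in porbits p | ~~ odd #|c|]|.

(* Main.v *)
Require Import Defs.
From mathcomp Require Import all_boot all_order all_algebra all_fingroup.
From mathcomp Require Import zify.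
Import GRing.Theory Num.Theory.
Set Implicit Arguments. Unset Strict Implicit. Unset Printing Implicit Defensive.

Definition hit (T : finType) (S : {set T}) (c : {set T}) := [exists y in c, y \in S].

Lemma iter_agree (T : finType) (p q : {perm T}) (S : {set T}) x :
  (forall y, y \notin S -> q y = p y) -> ~~ hit S (porbit p x) ->
  forall i, (q ^+ i)%g x = (p ^+ i)%g x.
Proof.
move=> E /existsPn H; elim=> [|i IH]; first by rewrite !expg0 !perm1.
rewrite !expgSr !permM IH E //.
by have := H ((p ^+ i)%g x); rewrite mem_porbit.
Qed.

Lemma porbit_agree (T : finType) (p q : {perm T}) (S : {set T}) x :
  (forall y, y \notin S -> q y = p y) -> ~~ hit S (porbit p x) ->
  porbit q x = porbit p x.
Proof.
move=> E H; apply/setP => y; apply/porbitP/porbitP => -[i ->]; exists i;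
  by rewrite (iter_agree E H).
Qed.

Lemma porbits_nohit (T : finType) (p q : {perm T}) (S : {set T}) c :
  (forall y, y \notin S -> q y = p y) -> c \in porbits p -> ~~ hit S c ->
  c \in porbits q.
Proof.
move=> E /imsetP[x _ ->] H; rewrite -(porbit_agree E H); exact: imset_f.
Qed.

Lemma sum_porbits (T : finType) (p : {perm T}) :
  \sum_(c in porbits p) #|c| = #|T|.
Proof.
have E : porbits p = preim_partition (porbit p) [set: T].
  apply/setP=> c; apply/imsetP/imsetP => -[x _ ->]; exists x => //;
  apply/setP => y; rewrite !inE /= eq_porbit_mem porbit_sym //.
rewrite E -(card_partition (preim_partitionP (porbit p) [set: T])).
by rewrite cardsT.
Qed.

Lemma sum_common (T : finType) (p q : {perm T}) (S : {set T}) (F : {set T} -> nat) :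
  (forall y, y \notin S -> q y = p y) ->
  \sum_(c in porbits p | ~~ hit S c) F c = \sum_(c in porbits q | ~~ hit S c) F c.
Proof.
move=> E; have E' : forall y, y \notin S -> p y = q y by move=> y /E ->.
apply: eq_bigl => c; apply/andP/andP => -[H1 H2]; split => //.
  exact: (porbits_nohit E H1 H2).
exact: (porbits_nohit E' H1 H2).
Qed.

Lemma hit_card (T : finType) (p : {perm T}) (S : {set T}) :
  \sum_(c in porbits p | hit S c) 1 <= #|S|.
Proof.
apply: leq_trans (leq_imset_card (porbit p) S).
rewrite sum1dep_card.
apply: subset_leq_card; apply/subsetP => c; rewrite inE => /andP[].
rewrite /porbits => /imsetP[x _ cE]; subst c.
rewrite /hit => /existsP[y /andP[yin yS]]; apply/imsetP; exists y => //.
by apply/eqP; rewrite eq_porbit_mem porbit_sym.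
Qed.

Lemma count_bound (T : finType) (p q : {perm T}) (S : {set T}) :
  #|S| <= 3 -> (forall y, y \notin S -> q y = p y) -> odd_perm p = odd_perm q ->
  [/\ `|ncycles q - ncycles p| <= 2, `|ncycles_odd q - ncycles_odd p| <= 2
    & `|ncycles_even q - ncycles_even p| <= 2].
Proof.
move=> S3 E Hodd.
have sp F (r : {perm T}) : \sum_(c in porbits r) F c =
   \sum_(c in porbits r | hit S c) F c + \sum_(c in porbits r | ~~ hit S c) F c.
  exact: bigID.
have nc r : ncycles r = \sum_(c in porbits r) 1 by rewrite sum1_card.
have no r : ncycles_odd r = \sum_(c in porbits r) odd #|c|.
  rewrite /ncycles_odd -sum1_card big_mkcond [RHS]big_mkcond /=.
  by apply: eq_bigr => c _; rewrite inE; case: (c \in porbits r); case: odd.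
have ne r : ncycles_even r = \sum_(c in porbits r) ~~ odd #|c|.
  rewrite /ncycles_even -sum1_card big_mkcond [RHS]big_mkcond /=.
  by apply: eq_bigr => c _; rewrite inE; case: (c \in porbits r); case: odd.
have ae r : \sum_(c in porbits r | hit S c) odd #|c| +
            \sum_(c in porbits r | hit S c) ~~ odd #|c| =
            \sum_(c in porbits r | hit S c) 1.
  by rewrite -big_split; apply: eq_bigr => c _; case: odd.
have zo r : odd (\sum_(c in porbits r | hit S c) #|c|) =
            odd (\sum_(c in porbits r | hit S c) odd #|c|).
  under eq_bigr => c _ do rewrite -[#|c|]odd_double_half -muln2.
  by rewrite big_split -big_distrl /= oddD oddM /= andbF addbF.
have zz : \sum_(c in porbits p | hit S c) #|c| = \sum_(c in porbits q | hit S c) #|c|.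
  have := sum_porbits p; rewrite -(sum_porbits q) sp [in RHS]sp (sum_common _ E).
  by move/addIn.
have aa : odd (\sum_(c in porbits p | hit S c) 1) = odd (\sum_(c in porbits q | hit S c) 1).
  move: Hodd; rewrite /odd_perm -!/(ncycles _) !nc sp [in X in _ = _ (+) odd X]sp.
  rewrite (sum_common _ E) !oddD => /addbI /addIb; done.
have ha := hit_card p S; have hb := hit_card q S.
have H1 := nc _ p; have H2 := nc _ q; have H3 := no _ p; have H4 := no _ q.
have H5 := ne _ p; have H6 := ne _ q.
rewrite sp in H1; rewrite sp -(sum_common _ E) in H2.
rewrite sp in H3; rewrite sp -(sum_common _ E) in H4.
rewrite sp in H5; rewrite sp -(sum_common _ E) in H6.
have m1 : (\sum_(c in porbits p | hit S c) 1) %% 2 = (\sum_(c in porbits q | hit S c) 1) %% 2.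
  by rewrite !modn2 aa.
have m2 : (\sum_(c in porbits p | hit S c) odd #|c|) %% 2 = (\sum_(c in porbits q | hit S c) odd #|c|) %% 2.
  by rewrite !modn2 -!zo zz.
have := ae p; have := ae q.
move: m1 m2 H1 H2 H3 H4 H5 H6 ha hb.
set a1 := \sum_(c in porbits p | hit S c) 1.
set a2 := \sum_(c in porbits q | hit S c) 1.
set o1 := \sum_(c in porbits p | hit S c) odd #|c|.
set o2 := \sum_(c in porbits q | hit S c) odd #|c|.
set e1 := \sum_(c in porbits p | hit S c) ~~ odd #|c|.
set e2 := \sum_(c in porbits q | hit S c) ~~ odd #|c|.
set z := \sum_(c in porbits q | hit S c) #|c|.
move=> *; split; lia.
Qed.
Lemma next_nth_mod (L : seq nat) i : uniq L -> i < size L ->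
  next L (nth 0 L i) = nth 0 L (i.+1 %% size L).
Proof.
move=> uL iL; rewrite next_nth mem_nth // index_uniq //.
case: L uL iL => [|y L] //= uL iL.
have [lt|eq] : i < size L \/ i = size L by lia.
  by rewrite modn_small // (set_nth_default 0).
by rewrite eq modnn nth_default.
Qed.

Lemma cyc_next m L (p : {perm 'I_m}) : is_cycle_of L p ->
  forall x, val (p x) = next L (val x).
Proof.
move=> [Hp H] x.
have sL : size L = m by rewrite (perm_size Hp) size_iota.
have xL : val x \in L by rewrite (perm_mem Hp) mem_iota /=.
have uL : uniq L by rewrite (perm_uniq Hp) iota_uniq.
have iL : index (val x) L < m by have := index_mem (val x) L; rewrite xL sL.
rewrite (H _ x iL) ?nth_index // -{2}(nth_index 0 xL) next_nth_mod //.
  by rewrite sL.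
by rewrite sL.
Qed.

Lemma exists_cycle n L : perm_eq L (iota 0 n.+1) ->
  exists p : {perm 'I_n.+1}, is_cycle_of L p.
Proof.
move=> Hp.
have uL : uniq L by rewrite (perm_uniq Hp) iota_uniq.
have sL : size L = n.+1 by rewrite (perm_size Hp) size_iota.
have lt (x : 'I_n.+1) : next L (val x) < n.+1.
  have : next L (val x) \in L.
    by rewrite mem_next (perm_mem Hp) mem_iota add0n ltn_ord.
  by rewrite (perm_mem Hp) mem_iota.
pose f (x : 'I_n.+1) : 'I_n.+1 := inord (next L (val x)).
have fE x : val (f x) = next L (val x) by rewrite /= inordK.
have finj : injective f.
  move=> x y /(congr1 val); rewrite !fE => /(can_inj (prev_next uL)).
  exact: val_inj.
exists (perm finj); split => // i x iL xE.
rewrite permE fE xE next_nth_mod ?sL //.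
Qed.

Lemma next_swap (U V : seq nat) : uniq (U ++ V) -> next (U ++ V) =1 next (V ++ U).
Proof. by move=> u y; rewrite -(rot_size_cat U V) next_rot. Qed.

Lemma next_cat_l (X W : seq nat) y : uniq (X ++ W) -> y \in X -> y != last 0 X ->
  next (X ++ W) y = next X y.
Proof.
case: X => [|x0 X] // u yX ny.
have hi : index y ((x0 :: X) ++ W) = index y (x0 :: X).
  by have := index_cat y (x0 :: X) W; rewrite yX.
have lt : index y (x0 :: X) < size X.
  have : index y (x0 :: X) < size X + 1 by rewrite addn1 index_mem.
  suff : index y (x0 :: X) != size X by lia.
  apply: contra ny => /eqP e.
  by rewrite -(nth_last 0 (x0 :: X)) /= -e nth_index.
rewrite !next_nth mem_cat yX hi.
move: (index y (x0 :: X)) lt => i lt /=.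
by rewrite nth_cat lt.
Qed.

Lemma next3 (X B C : seq nat) y : uniq (X ++ B ++ C) ->
  y \notin [:: last 0 X; last 0 B; last 0 C] ->
  next (X ++ B ++ C) y = next (X ++ C ++ B) y.
Proof.
move=> u; rewrite !inE => /norP[n1 /norP[n2 n3]].
have u2 : uniq (X ++ C ++ B).
  by rewrite (perm_uniq (_ : perm_eq (X ++ C ++ B) (X ++ B ++ C))) // perm_cat2l perm_catC.
have [yX|nX] := boolP (y \in X).
  by rewrite next_cat_l // next_cat_l.
have uBCX : uniq (B ++ C ++ X) by rewrite catA -uniq_catC.
have uBXC : uniq (B ++ X ++ C) by rewrite uniq_catCA.
have uCXB : uniq (C ++ X ++ B) by rewrite uniq_catCA.
have uCBX : uniq (C ++ B ++ X) by rewrite catA -uniq_catC.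
have [yB|nB] := boolP (y \in B).
  have e1 : next (X ++ B ++ C) y = next (B ++ (C ++ X)) y.
    by rewrite next_swap // -catA.
  have e2 : next (X ++ C ++ B) y = next (B ++ (X ++ C)) y.
    by rewrite catA (@next_swap (X ++ C) B) ?catA //= -catA.
  by rewrite e1 e2 !next_cat_l.
have [yC|nC] := boolP (y \in C).
  have e1 : next (X ++ B ++ C) y = next (C ++ (X ++ B)) y.
    by rewrite catA (@next_swap (X ++ B) C) ?catA //= -catA.
  have e2 : next (X ++ C ++ B) y = next (C ++ (B ++ X)) y.
    by rewrite next_swap // -catA.
  by rewrite e1 e2 !next_cat_l.
by rewrite !next_nth !mem_cat (negbTE nX) (negbTE nB) (negbTE nC).
Qed.

Lemma transp_dec s i j k : valid_transp (size s) i j k ->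
  exists A B C D, s = A ++ B ++ C ++ D /\ transp s i j k = A ++ C ++ B ++ D.
Proof.
case/and4P => h1 h2 h3 h4.
exists (take i.-1 s), (drop i.-1 (take j s)), (drop j (take k s)), (drop k s).
split; last by [].
have e1 : take j s = take i.-1 s ++ drop i.-1 (take j s).
  by rewrite -{1}(cat_take_drop i.-1 (take j s)) take_takel //; lia.
have e2 : take k s = take j s ++ drop j (take k s).
  by rewrite -{1}(cat_take_drop j (take k s)) take_takel //; lia.
by rewrite catA catA -e1 -e2 cat_take_drop.
Qed.

Lemma transp_next s i j k : valid_transp (size s) i j k -> uniq (0 :: s) ->
  perm_eq (transp s i j k) s /\
  exists l1 l2 l3, forall y, y \notin [:: l1; l2; l3] ->
    next (0 :: transp s i j k) y = next (0 :: s) y.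
Proof.
move=> v u; have [A [B [C [D [Es Et]]]]] := transp_dec v.
rewrite Et; split.
  by rewrite Es perm_cat2l perm_catCA.
set X := D ++ 0 :: A.
have E1 : 0 :: s = ((0 :: A) ++ B ++ C) ++ D by rewrite Es -!catA.
have E2 : 0 :: A ++ C ++ B ++ D = ((0 :: A) ++ C ++ B) ++ D by rewrite -!catA.
have uX : uniq (X ++ B ++ C) by rewrite /X -catA -uniq_catC -E1.
have u2 : uniq (((0 :: A) ++ C ++ B) ++ D).
  rewrite -E2 (perm_uniq (_ : perm_eq _ (0 :: s))) //.
  by rewrite perm_cons Es perm_cat2l perm_catCA.
exists (last 0 X), (last 0 B), (last 0 C) => y ny.
rewrite E1 E2 (next_swap u2) (next_swap (_ : uniq (((0 :: A) ++ B ++ C) ++ D))); last by rewrite -E1.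
have -> : D ++ (0 :: A) ++ B ++ C = X ++ B ++ C by rewrite /X -catA.
have -> : D ++ (0 :: A) ++ C ++ B = X ++ C ++ B by rewrite /X -catA.
by rewrite (next3 uX ny).
Qed.

Lemma cycle_porbits m L (p : {perm 'I_m.+1}) : is_cycle_of L p -> #|porbits p| = 1.
Proof.
move=> [Hp H].
have sL : size L = m.+1 by rewrite (perm_size Hp) size_iota.
have uL : uniq L by rewrite (perm_uniq Hp) iota_uniq.
have ltL i : i < m.+1 -> nth 0 L i < m.+1.
  move=> lt; have : nth 0 L i \in L by rewrite mem_nth // sL.
  by rewrite (perm_mem Hp) mem_iota.
pose x0 : 'I_m.+1 := inord (nth 0 L 0).
have it i : i < m.+1 -> val ((p ^+ i)%g x0) = nth 0 L i.
  elim: i => [|i IH] lt; first by rewrite expg0 perm1 /= inordK // ltL.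
  rewrite expgSr permM (H i _ (ltnW lt) (IH (ltnW lt))) modn_small //.
have all y : y \in porbit p x0.
  have yL : val y \in L by rewrite (perm_mem Hp) mem_iota /= ltn_ord.
  have iL : index (val y) L < m.+1 by have := index_mem (val y) L; rewrite yL sL.
  have -> : y = (p ^+ (index (val y) L))%g x0.
    by apply: val_inj; rewrite it // nth_index.
  exact: mem_porbit.
have -> : porbits p = [set porbit p x0].
  apply/setP => c; rewrite inE; apply/imsetP/eqP => [[y _ ->]|->].
    by apply/eqP; rewrite eq_porbit_mem.
  by exists x0.
by rewrite cards1.
Qed.

Lemma main_ind n (pt g : {perm 'I_n.+1}) k :
  (forall x, val (pt x) = next (rev (iota 0 n.+1)) (val x)) ->
  forall s (sbar : {perm 'I_n.+1}), perm_eq s (iota 1 n) ->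
  is_cycle_of (0 :: s) sbar -> sortable_in s k ->
  [/\ `|ncycles (g * sbar * pt) - ncycles g| <= k.*2,
      `|ncycles_odd (g * sbar * pt) - ncycles_odd g| <= k.*2
    & `|ncycles_even (g * sbar * pt) - ncycles_even g| <= k.*2].
Proof.
move=> Hpt; elim: k => [|k IH] s sbar Hs Hc.
  move=> /= Es.
  have e : (sbar * pt = 1)%g.
    apply/permP => x; apply: val_inj.
    rewrite permM perm1 Hpt (cyc_next Hc) Es (perm_size Hs) size_iota.
    rewrite next_rev ?iota_uniq // -[0 :: iota 1 n]/(iota 0 n.+1) prev_next //.
    exact: iota_uniq.
  rewrite -mulgA e mulg1; split; lia.
move=> /= [i [j [k' [v Hsort]]]].
have uL : uniq (0 :: s) by case: Hc => Hp _; rewrite (perm_uniq Hp) iota_uniq.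
have [Hpe [l1 [l2 [l3 Hn]]]] := transp_next v uL.
have Hs' : perm_eq (transp s i j k') (iota 1 n) := perm_trans Hpe Hs.
have [sbar' Hc'] : exists p : {perm 'I_n.+1}, is_cycle_of (0 :: transp s i j k') p.
  by apply: exists_cycle; rewrite /= perm_cons.
have [IH1 IH2 IH3] := IH _ _ Hs' Hc' Hsort.
pose S0 : {set 'I_n.+1} := [set x in [:: inord l1; inord l2; inord l3]].
have HS y : y \notin S0 -> sbar' y = sbar y.
  move=> ny; apply: val_inj; rewrite (cyc_next Hc') (cyc_next Hc) Hn //.
  apply: contra ny; rewrite !inE => /or3P[] /eqP e; rewrite -e inord_val eqxx ?orbT //.
have cS : #|g @^-1: S0| <= 3.
  rewrite card_preimset; last exact: perm_inj.
  by rewrite cardsE (leq_trans (card_size _)).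
have cA : forall y, y \notin g @^-1: S0 -> (g * sbar * pt)%g y = (g * sbar' * pt)%g y.
  by move=> y; rewrite inE => ny; rewrite !permM HS.
have cO : odd_perm (g * sbar' * pt)%g = odd_perm (g * sbar * pt)%g.
  by rewrite !odd_permM /odd_perm (cycle_porbits Hc) (cycle_porbits Hc').
have [c1 c2 c3] := count_bound cS cA cO.
split; lia.
Qed.

Theorem theorem1 (n : nat) (s : seq nat) (sbar pt : {perm 'I_n.+1}) (k : nat) :
  perm_eq s (iota 1 n) ->
  is_cycle_of (0 :: s) sbar ->
  is_cycle_of (rev (iota 0 n.+1)) pt ->
  sortable_in s k ->
  ((\max_(g : {perm 'I_n.+1})
      maxn (maxn `|ncycles (g * sbar * pt) - ncycles g|
                 `|ncycles_odd (g * sbar * pt) - ncycles_odd g|)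
           `|ncycles_even (g * sbar * pt) - ncycles_even g|)%N%:R / 2%:R
    <= (k%:R : rat))%R.
Proof.
move=> Hs Hc Hpt Hsort.
have Hpt' := cyc_next Hpt.
have M : (\max_(g : {perm 'I_n.+1})
      maxn (maxn `|ncycles (g * sbar * pt) - ncycles g|
                 `|ncycles_odd (g * sbar * pt) - ncycles_odd g|)
           `|ncycles_even (g * sbar * pt) - ncycles_even g|)%N <= k * 2.
  apply/bigmax_leqP => g _.
  have [h1 h2 h3] := main_ind g Hpt' Hs Hc Hsort.
  by rewrite !geq_max muln2 h1 h2 h3.
by rewrite ler_pdivrMr ?ltr0n // -natrM ler_nat.
Qed.
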